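(* Let $M$ be a structure in a relational language with finitely many constant symbols, and $n\in\omega$. Suppose $\mathrm{Age}(M)$ is $(n+1)$-wqo. If $M^*$ is an expansion of $M$ by finitely many constants, then $\mathrm{Age}(M^* )$ is $n$-wqo.
   Context: $\mathrm{Age}(M)$ is the class of isomorphism types of finite substructures of $M$, quasi-ordered by embeddability; it is wqo if it contains no infinite antichain. $\mathrm{Age}(M)$ is $n$-wqo if $\mathrm{Age}(M')$ is wqo for every expansion $M'$ of $M$ by $n$ unary predicates partitioning the universe. *)

(* Defs.v *)
From Stdlib Require List.
From mathcomp Require Import all_boot.

Set Implicit Arguments.
Unset Strict Implicit.
Unset Printing Implicit Defensive.

Record language := Language {
  rsym : Type;
  arity : rsym -> nat;
  ncst : nat }.

Record structure (L : language) := Structure {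
  dom : Type;
  rel : forall r : rsym L, ('I_(arity r) -> dom) -> Prop;
  cst : 'I_(ncst L) -> dom }.

Arguments rel {L} s r _.
Arguments cst {L} s _.

Section Age.
Variables (L : language) (M : structure L).

(* Finite substructures of M: finite subsets of the universe closed
   under the constants (the language is relational apart from constants). *)
Definition finsub (A : dom M -> Prop) : Prop :=
  (exists s : list (dom M), forall x, A x -> List.In x s) /\
  (forall c, A (cst M c)).

Definition embeds (A B : dom M -> Prop) : Prop :=
  exists f : dom M -> dom M,
    (forall x, A x -> B (f x)) /\
    (forall x y, A x -> A y -> f x = f y -> x = y) /\
    (forall (r : rsym L) (t : 'I_(arity r) -> dom M),
        (forall i, A (t i)) -> (rel M r t <-> rel M r (fun i => f (t i)))) /\
    (forall c, f (cst M c) = cst M c).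

(* Age(M) (isomorphism types of finite substructures, quasi-ordered by
   embeddability) is wqo: it has no infinite antichain. *)
Definition age_wqo : Prop :=
  ~ exists A : nat -> (dom M -> Prop),
      (forall i, finsub (A i)) /\
      (forall i j, i <> j -> ~ embeds (A i) (A j)).
End Age.

Definition col_lang (L : language) (n : nat) : language :=
  @Language (rsym L + 'I_n)%type
    (fun s => match s with inl r => arity r | inr _ => 1 end) (ncst L).

(* Expansion of M by n unary predicates partitioning the universe,
   given by col : x |-> the unique predicate containing x. *)
Definition col_exp (L : language) (M : structure L) (n : nat)
  (col : dom M -> 'I_n) : structure (col_lang L n) :=
  @Structure (col_lang L n) (dom M)
    (fun s => match s as s0 return ('I_(@arity (col_lang L n) s0) -> dom M) -> Prop with
              | inl r => fun t => rel M r t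
              | inr i => fun t => col (t ord0) = i
              end)
    (cst M).
Arguments col_exp {L} M {n} col.

Definition age_nwqo (L : language) (M : structure L) (n : nat) : Prop :=
  forall col : dom M -> 'I_n, age_wqo (col_exp M col).

Definition cst_lang (L : language) (k : nat) : language :=
  @Language (rsym L) (@arity L) (ncst L + k).

Definition cst_exp (L : language) (M : structure L) (k : nat)
  (d : 'I_k -> dom M) : structure (cst_lang L k) :=
  @Structure (cst_lang L k) (dom M) (rel M)
    (fun c => match split c with inl i => cst M i | inr j => d j end).
Arguments cst_exp {L} M {k} d.

(* Main.v *)
From Stdlib Require Import ClassicalEpsilon Classical.
Require Import Defs.
From mathcomp Require Import all_boot.
From mathcomp Require Import zify.

Lemma incr_mono (g : nat -> nat) : (forall t, g t < g t.+1) -> forall a b, a < b -> g a < g b.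
Proof.
move=> Hg a b; elim: b => [|b IH] //; rewrite ltnS leq_eqVlt => /orP [/eqP ->|H]; first exact: Hg.
exact: ltn_trans (IH H) (Hg b).
Qed.

Lemma chain_build (Q : nat -> Prop) (S : nat -> nat -> Prop) i0 :
  Q i0 -> (forall i, Q i -> exists j, i < j /\ Q j /\ S i j) ->
  exists g : nat -> nat, forall t, Q (g t) /\ g t < g t.+1 /\ S (g t) (g t.+1).
Proof.
move=> H0 Hs.
have step : forall x : {i | Q i}, {j | Q j /\ proj1_sig x < j /\ S (proj1_sig x) j}.
  move=> [i Hi]; apply: constructive_indefinite_description.
  have [j [? [? ?]]] := Hs i Hi; by exists j.
pose nx (x : {i | Q i}) : {i | Q i} :=
  exist _ (proj1_sig (step x)) (proj1 (proj2_sig (step x))).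
exists (fun t => proj1_sig (iter t nx (exist _ i0 H0))) => t /=.
split; first exact: proj2_sig.
exact: (proj2 (proj2_sig (step (iter t nx (exist _ i0 H0))))).
Qed.

Lemma ramsey_lite (R : nat -> nat -> Prop) :
  (forall h : nat -> nat, (forall t, h t < h t.+1) -> exists a b, a <> b /\ R (h a) (h b)) ->
  exists g : nat -> nat, (forall t, g t < g t.+1) /\
    ((forall t, R (g t) (g t.+1)) \/ (forall t, R (g t.+1) (g t))).
Proof.
move=> Hna.
case: (classic (exists N, forall i, N <= i -> exists j, i < j /\ R i j)) => [[N HN]|HA].
  have [g Hg] := chain_build (fun i => N <= i) R N (leqnn N)
     (fun i Hi => let: ex_intro j (conj a b) := HN i Hi in
        ex_intro _ j (conj a (conj (leq_trans Hi (ltnW a)) b))).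
  exists g; split => [t|]; first by case: (Hg t) => _ [].
  by left => t; case: (Hg t) => _ [].
have HB : forall N, exists i, N <= i /\ ~ exists j, i < j /\ R i j.
  move=> N; apply: NNPP => Hc; apply: HA; exists N => i Hi; apply: NNPP => Hn.
  by apply: Hc; exists i.
have [i0 [_ Hi0]] := HB 0.
have [g Hg] := chain_build (fun i => ~ exists j, i < j /\ R i j) (fun _ _ => True) i0 Hi0
  (fun i _ => let: ex_intro j (conj a b) := HB i.+1 in ex_intro _ j (conj a (conj b I))).
have gi : forall t, g t < g t.+1 by move=> t; case: (Hg t) => _ [].
have gm := @incr_mono g gi.
have gup : forall a b, a < b -> ~ R (g a) (g b).
  move=> a b ab HR; case: (Hg a) => H _; apply: H; exists (g b); split => //; exact: gm.
case: (classic (exists N, forall t, N <= t -> exists t', t < t' /\ R (g t') (g t))) => [[N HN]|HC].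
  have [h Hh] := chain_build (fun i => N <= i) (fun t t' => R (g t') (g t)) N (leqnn N)
     (fun i Hi => let: ex_intro j (conj a b) := HN i Hi in
        ex_intro _ j (conj a (conj (leq_trans Hi (ltnW a)) b))).
  exists (fun t => g (h t)); split => [t|]; first by apply: gm; case: (Hh t) => _ [].
  by right => t; case: (Hh t) => _ [].
have HD : forall N, exists t, N <= t /\ ~ exists t', t < t' /\ R (g t') (g t).
  move=> N; apply: NNPP => Hc; apply: HC; exists N => i Hi; apply: NNPP => Hn.
  by apply: Hc; exists i.
have [j0 [_ Hj0]] := HD 0.
have [h Hh] := chain_build (fun t => ~ exists t', t < t' /\ R (g t') (g t)) (fun _ _ => True) j0 Hj0
  (fun i _ => let: ex_intro j (conj a b) := HD i.+1 in ex_intro _ j (conj a (conj b I))).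
have hi : forall t, h t < h t.+1 by move=> t; case: (Hh t) => _ [].
have hm := @incr_mono h hi.
have [a [b [ab HR]]] := Hna (fun t => g (h t)) (fun t => gm _ _ (hi t)).
case: (ltngtP a b) => [lt|gt|eq]; last by [].
  by exfalso; move: HR; apply: gup; exact: hm.
exfalso; case: (Hh b) => H _; apply: H; exists (h a); split => //; exact: hm.
Qed.

Lemma pigeon (T : finType) (p : nat -> T) :
  exists m m', m < m' /\ m' <= #|T| /\ p m = p m'.
Proof.
apply: NNPP => Hn.
have inj : injective (fun i : 'I_#|T|.+1 => p i).
  move=> i j /= E; apply/val_inj => /=.
  case: (ltngtP i j) => // [lt|gt].
    by exfalso; apply: Hn; exists i, j; split => //; split => //; rewrite -ltnS.
  by exfalso; apply: Hn; exists j, i; split => //; split => //; rewrite -ltnS.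
by have := leq_card _ inj; rewrite card_ord ltnn.
Qed.
Definition isemb (L : language) (S : structure L) (A B : dom S -> Prop) (f : dom S -> dom S) : Prop :=
    (forall x, A x -> B (f x)) /\
    (forall x y, A x -> A y -> f x = f y -> x = y) /\
    (forall (r : rsym L) (t : 'I_(arity r) -> dom S),
        (forall i, A (t i)) -> (Defs.rel S r t <-> Defs.rel S r (fun i => f (t i)))) /\
    (forall c, f (cst S c) = cst S c).
Arguments isemb {L S}.

Lemma isemb_comp L (S : structure L) (A B C : dom S -> Prop) f g :
  isemb A B f -> isemb B C g -> @isemb L S A C (fun x => g (f x)).
Proof.
move=> [f1 [f2 [f3 f4]]] [g1 [g2 [g3 g4]]]; split; [|split; [|split]].
- by move=> x Ax; apply: g1; apply: f1.
- by move=> x y Ax Ay E; apply: f2 => //; apply: g2 => //; apply: f1.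
- move=> r t Ht; rewrite (f3 r t Ht); apply: (g3 r (fun i => f (t i))).
  by move=> i; apply: f1.
- by move=> c; rewrite f4 g4.
Qed.

Lemma isemb_id L (S : structure L) (A : dom S -> Prop) : isemb A A id.
Proof. by split; [|split; [|split]]. Qed.

Fixpoint compd (T : Type) (F : nat -> T -> T) (t m : nat) : T -> T :=
  match t with 0 => id | t'.+1 => fun x => compd T F t' m.+1 (F m x) end.
Arguments compd {T}.

Lemma compd_add T (F : nat -> T -> T) t1 t2 m x :
  compd F (t1 + t2) m x = compd F t2 (m + t1) (compd F t1 m x).
Proof.
elim: t1 m x => [|t1 IH] m x /=; first by rewrite addn0.
by rewrite IH addSnnS.
Qed.

Lemma compd_emb L (S : structure L) (B : nat -> dom S -> Prop) F N :
  (forall s, s < N -> isemb (B s) (B s.+1) (F s)) ->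
  forall t m, m + t <= N -> isemb (B m) (B (m + t)) (compd F t m).
Proof.
move=> HF; elim=> [|t IH] m Hm /=; first by rewrite addn0; apply: isemb_id.
apply: (@isemb_comp _ _ _ (B m.+1)); first by apply: HF; rewrite -addn1 (leq_trans _ Hm) // leq_add2l.
rewrite -addSnnS; apply: IH; by rewrite addSnnS.
Qed.
Arguments compd_emb {L S B F N}.

Definition colp (L : language) (M : structure L) (n k : nat) (d : 'I_k -> dom M)
  (col : dom M -> 'I_n) : dom M -> 'I_n.+1 :=
  fun x => if excluded_middle_informative (exists j, d j = x) then ord_max
           else widen_ord (leqnSn n) (col x).
Arguments colp {L M n k}.

Lemma colp_max L (M : structure L) (n k : nat) (d : 'I_k -> dom M) (col : dom M -> 'I_n) (x : dom M) :
  colp d col x = ord_max <-> exists j, d j = x.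
Proof.
rewrite /colp; case: excluded_middle_informative => // H; split => // E.
by have := congr1 val E => /= E'; move: (ltn_ord (col x)); rewrite E' ltnn.
Qed.
Arguments colp_max {L M n k} d col {x}.

Lemma colp_nmax L (M : structure L) (n k : nat) (d : 'I_k -> dom M) (col : dom M -> 'I_n) (x : dom M) :
  ~ (exists j, d j = x) -> colp d col x = widen_ord (leqnSn n) (col x).
Proof. by rewrite /colp; case: excluded_middle_informative. Qed.
Arguments colp_nmax {L M n k d col x}.

Lemma emb_colp L (M : structure L) (n k : nat) (d : 'I_k -> dom M) (col : dom M -> 'I_n) (X Y : dom M -> Prop) f (x : dom M) :
  @isemb _ (col_exp M (colp d col)) X Y f -> X x -> colp d col (f x) = colp d col x.
Proof.
move=> [_ [_ [H3 _]]] Xx.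
have := H3 (inr (colp d col x)) (fun _ => x) (fun _ => Xx).
by case=> /(_ erefl).
Qed.
Arguments emb_colp {L M n k d col X Y f x}.

Lemma star_of L (M : structure L) (n k : nat) (d : 'I_k -> dom M) (col : dom M -> 'I_n) (X Y : dom M -> Prop) G :
  @isemb _ (col_exp M (colp d col)) X Y G -> (forall j, G (d j) = d j) ->
  @embeds _ (col_exp (cst_exp M d) col) X Y.
Proof.
move=> HG Hfix; have HC := fun x => @emb_colp L M n k d col X Y G x HG.
case: HG => [g1 [g2 [g3 g4]]].
exists G; split; [exact: g1|split; [exact: g2|split]].
- move=> [r|i] t Ht.
    exact: (g3 (inl r) t Ht).
  rewrite /=; set x := t ord0.
  case: (classic (exists j, d j = x)) => [[j Ej]|Hn].
    by rewrite -Ej Hfix.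
  have E := HC x (Ht ord0); rewrite (colp_nmax Hn) in E.
  have Hn' : ~ (exists j, d j = G x).
    by move=> /(colp_max d col); rewrite E => /(congr1 val) /= E'; move: (ltn_ord (col x)); rewrite E' ltnn.
  rewrite (colp_nmax Hn') in E.
  have E2 : col (G x) = col x by apply/val_inj; exact: (congr1 val E).
  by rewrite E2.
- move=> c /=; case: (split c) => [i|j]; [exact: g4|exact: Hfix].
Qed.
Arguments star_of {L M n k d col X Y G}.

Lemma chain_contra L (M : structure L) (n k : nat) (d : 'I_k -> dom M) (col : dom M -> 'I_n)
  (B : nat -> dom M -> Prop) :
  (forall m j, B m (d j)) ->
  (forall s, s < #|{ffun 'I_k -> option 'I_k}| ->
     exists f, @isemb _ (col_exp M (colp d col)) (B s) (B s.+1) f) ->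
  (forall m m', m < m' -> m' <= #|{ffun 'I_k -> option 'I_k}| ->
     ~ @embeds _ (col_exp (cst_exp M d) col) (B m) (B m')) -> False.
Proof.
move=> hB hstep hanti.
set N := #|{ffun 'I_k -> option 'I_k}| in hstep hanti.
have H' : forall s, exists f, s < N -> @isemb _ (col_exp M (colp d col)) (B s) (B s.+1) f.
  move=> s; case: (ltnP s N) => Hs; last by exists id.
  by have [f Hf] := hstep s Hs; exists f.
pose F s := proj1_sig (constructive_indefinite_description _ (H' s)).
have HF : forall s, s < N -> @isemb _ (col_exp M (colp d col)) (B s) (B s.+1) (F s).
  by move=> s; exact: (proj2_sig (constructive_indefinite_description _ (H' s))).
pose rep (x : dom M) := epsilon (inhabits (@None 'I_k)) (fun o => exists i, o = Some i /\ d i = x).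
have rep_spec : forall x, (exists i, d i = x) -> exists i, rep x = Some i /\ d i = x.
  move=> x [i Ei]; apply: (epsilon_spec (inhabits (@None 'I_k)) (fun o => exists i, o = Some i /\ d i = x)).
  by exists (Some i), i.
have rep_inj : forall x y, (exists i, d i = x) -> (exists i, d i = y) -> rep x = rep y -> x = y.
  move=> x y /rep_spec [i [Ri Ei]] /rep_spec [i' [Ri' Ei']]; rewrite Ri Ri' => -[Eii]; subst i'.
  by rewrite -Ei -Ei'.
pose K m := compd F (N - m) m.
have Kemb : forall m, m <= N -> @isemb _ (col_exp M (colp d col)) (B m) (B N) (K m).
  move=> m Hm; have := compd_emb HF (N - m) m; rewrite subnKC //; apply.
  by [].
have inD : forall m j, m <= N -> exists i, d i = K m (d j).
  move=> m j Hm; apply/(colp_max d col).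
  rewrite (emb_colp (Kemb m Hm) (hB m j)); apply/(colp_max d col); by exists j.
pose p m := [ffun j => rep (K m (d j))].
have [m [m' [lt [le Ep]]]] := @pigeon {ffun 'I_k -> option 'I_k} p.
have Hm : m <= N by apply: ltnW; apply: leq_trans lt le.
pose G := compd F (m' - m) m.
have Gemb : @isemb _ (col_exp M (colp d col)) (B m) (B m') G.
  have := compd_emb HF (m' - m) m; rewrite subnKC ?(ltnW lt) //; apply.
  by [].
apply: (hanti m m' lt le); apply: (star_of Gemb) => j.
have E : p m j = p m' j by rewrite Ep.
rewrite /p !ffunE in E.
have E2 := rep_inj _ _ (inD m j Hm) (inD m' j le) E.
move: E2; rewrite /K (_ : N - m = (m' - m) + (N - m')); last by have leN : m' <= N := le; lia.
rewrite compd_add subnKC ?(ltnW lt) // -/G.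
case: (Kemb m' le) => k1 [k2 _] E2.
apply: k2 E2 => //; by [apply: (proj1 Gemb); apply: hB|apply: hB].
Qed.
Arguments chain_contra {L M n k d col}.

Theorem lemma5 (L : language) (M : structure L) (n : nat) :
  age_nwqo M n.+1 ->
  forall (k : nat) (d : 'I_k -> dom M), age_nwqo (cst_exp M d) n.
Proof.
move=> H k d col [A [HA Hanti]].
have Hw := H (colp d col).
have fin : forall i, @finsub _ (col_exp M (colp d col)) (A i).
  move=> i; case: (HA i) => Hs Hc; split => // c.
  have E := @unsplitK (ncst L) k (inl c); have := Hc (unsplit (inl c)); rewrite /col_exp /cst_exp /= -/(unsplit (inl c)) E /=; by [].
have hD : forall i j, A i (d j).
  by move=> i j; case: (HA i) => _ Hc; have E := @unsplitK (ncst L) k (inr j); have := Hc (unsplit (inr j)); rewrite /col_exp /cst_exp /= -/(unsplit (inr j)) E /=; by [].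
have [g [gi [asc|desc]]] :=
  ramsey_lite (fun i j => @embeds _ (col_exp M (colp d col)) (A i) (A j))
   (fun h hi => NNPP _ (fun Hn => Hw (ex_intro _ (fun t => A (h t))
       (conj (fun t => fin (h t))
          (fun a b ab E => Hn (ex_intro _ a (ex_intro _ b (conj ab E)))))))).
- apply: (@chain_contra L M n k d col (fun t => A (g t))).
  + move=> m j; exact: hD.
  + move=> s _; exact: asc s.
  + move=> m m' lt _. apply: Hanti; apply/eqP; rewrite neq_ltn; apply/orP; left; exact: incr_mono gi _ _ lt.
- set N := #|{ffun 'I_k -> option 'I_k}|.
  apply: (@chain_contra L M n k d col (fun t => A (g (N - t)))).
  + move=> m j; exact: hD.
  + move=> s Hs; have := desc (N - s.+1); rewrite subnSK //.
  + move=> m m' lt le; apply: Hanti; apply/eqP; rewrite neq_ltn; apply/orP; right.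
    apply: incr_mono gi _ _ _.
    have le' : m' <= N := le. lia.
Qed.
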